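(* Let $X$ be a closure-stable weakly u-II-compatible ub-space. Then $X$ is proper if and only if it is Cauchy complete and preproper. Moreover, every such proper space is locally compact.
   Context: An ub-space is a set $X$ with uniformity $\mathcal{U}_X$ and bornology $\mathcal{B}_X$ (cover closed under subsets and finite unions); topological notions refer to the induced topology. Closure-stable: the closure of every bounded set is bounded. Proper: every bounded closed set is compact. Preproper: every bounded set is precompact. II-compatible: each point has a bounded neighbourhood. Weakly u-II-compatible: $X$ is a subspace (uniform subspace with bornology $\{B\cap X:B\in\mathcal{B}_{\bar X}\}$) of some Cauchy complete II-compatible ub-space $\bar X$. *)

(* Defs.v *)
From Stdlib Require Import List Classical.
Set Implicit Arguments.

Record is_uniformity (X : Type) (U : (X -> X -> Prop) -> Prop) : Prop := {
  unif_full : U (fun _ _ => True);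
  unif_up : forall E F : X -> X -> Prop, U E -> (forall x y, E x y -> F x y) -> U F;
  unif_inter : forall E F, U E -> U F -> U (fun x y => E x y /\ F x y);
  unif_diag : forall E, U E -> forall x, E x x;
  unif_sym : forall E, U E -> U (fun x y => E y x);
  unif_comp : forall E, U E -> exists D, U D /\ forall x y z, D x y -> D y z -> E x z
}.

Record is_bornology (X : Type) (B : (X -> Prop) -> Prop) : Prop := {
  born_cover : forall x, exists A, B A /\ A x;
  born_sub : forall A A' : X -> Prop, B A -> (forall x, A' x -> A x) -> B A';
  born_union : forall A A', B A -> B A' -> B (fun x => A x \/ A' x)
}.

Record ubspace : Type := UBSpace {
  carrier :> Type;
  unif : (carrier -> carrier -> Prop) -> Prop;
  born : (carrier -> Prop) -> Prop;
  unif_ax : is_uniformity unif;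
  born_ax : is_bornology born
}.

Section UB.
Variable X : ubspace.

Definition bounded (A : X -> Prop) : Prop := born X A.

Definition nbhd (x : X) (N : X -> Prop) : Prop :=
  exists E, unif X E /\ forall y, E x y -> N y.

Definition is_open (A : X -> Prop) : Prop := forall x, A x -> nbhd x A.

Definition closure (A : X -> Prop) : X -> Prop :=
  fun x => forall N, nbhd x N -> exists y, N y /\ A y.

Definition is_closed (A : X -> Prop) : Prop := forall x, closure A x -> A x.

Definition compact (K : X -> Prop) : Prop :=
  forall (I : Type) (O : I -> X -> Prop),
    (forall i, is_open (O i)) ->
    (forall x, K x -> exists i, O i x) ->
    exists l : list I, forall x, K x -> exists i, In i l /\ O i x.

Definition precompact (A : X -> Prop) : Prop :=
  forall E, unif X E ->
    exists l : list X, (forall a, In a l -> A a) /\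
      forall x, A x -> exists a, In a l /\ E a x.

Definition is_filter (F : (X -> Prop) -> Prop) : Prop :=
  F (fun _ => True) /\ ~ F (fun _ => False) /\
  (forall S T : X -> Prop, F S -> (forall x, S x -> T x) -> F T) /\
  (forall S T, F S -> F T -> F (fun x => S x /\ T x)).

Definition cauchy_filter (F : (X -> Prop) -> Prop) : Prop :=
  is_filter F /\
  forall E, unif X E -> exists S, F S /\ forall x y, S x -> S y -> E x y.

Definition filter_converges (F : (X -> Prop) -> Prop) (x : X) : Prop :=
  forall N, nbhd x N -> F N.

Definition cauchy_complete : Prop :=
  forall F, cauchy_filter F -> exists x, filter_converges F x.

Definition closure_stable : Prop :=
  forall A, bounded A -> bounded (closure A).

Definition proper : Prop :=
  forall A, bounded A -> is_closed A -> compact A.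

Definition preproper : Prop :=
  forall A, bounded A -> precompact A.

Definition II_compatible : Prop :=
  forall x, exists N, nbhd x N /\ bounded N.

Definition locally_compact : Prop :=
  forall x, exists K, nbhd x K /\ compact K.

End UB.

Definition ub_subspace (X Y : ubspace) (i : X -> Y) : Prop :=
  (forall a b, i a = i b -> a = b) /\
  (forall E : X -> X -> Prop,
     unif X E <-> exists E', unif Y E' /\ forall a b, E a b <-> E' (i a) (i b)) /\
  (forall A : X -> Prop,
     born X A <-> exists A', born Y A' /\ forall a, A a <-> A' (i a)).

Definition weakly_u_II_compatible (X : ubspace) : Prop :=
  exists (Y : ubspace) (i : X -> Y),
    cauchy_complete Y /\ II_compatible Y /\ ub_subspace X Y i.

(* Main.v *)
Require Import Defs.
From Stdlib Require Import List Classical ClassicalEpsilon FunctionalExtensionality PropExtensionality.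

Arguments nbhd {X} x N.
Arguments is_open {X} A.
Arguments closure {X} A _.
Arguments is_closed {X} A.
Arguments compact {X} K.
Arguments precompact {X} A.
Arguments is_filter {X} F.
Arguments cauchy_filter {X} F.
Arguments filter_converges {X} F x.
Arguments bounded {X} A.

(* ---------- Zorn's lemma (Bourbaki-Witt tower) ---------- *)
Definition fle {Y : Type} (F G : Y -> Prop) := forall y, F y -> G y.
Definition fchain {Y : Type} (C : (Y -> Prop) -> Prop) :=
  forall F G, C F -> C G -> fle F G \/ fle G F.
Definition fsup {Y : Type} (base : Y -> Prop) (C : (Y -> Prop) -> Prop) : Y -> Prop :=
  fun y => base y \/ exists F, C F /\ F y.

Inductive tower {Y : Type} (base : Y -> Prop) (g : (Y -> Prop) -> (Y -> Prop))
  : (Y -> Prop) -> Prop :=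
| tw_succ : forall F, tower base g F -> tower base g (g F)
| tw_sup : forall C, (forall F, C F -> tower base g F) -> fchain C ->
    tower base g (fsup base C).

Lemma fle_refl {Y : Type} (F : Y -> Prop) : fle F F.
Proof. intros y h; exact h. Qed.
Lemma fle_trans {Y : Type} (F G H : Y -> Prop) : fle F G -> fle G H -> fle F H.
Proof. intros a b y h; apply b, a, h. Qed.
Lemma fle_antisym {Y : Type} (F G : Y -> Prop) : fle F G -> fle G F -> F = G.
Proof.
  intros a b; apply functional_extensionality; intro y;
  apply propositional_extensionality; split; [apply a|apply b].
Qed.

Definition extreme {Y : Type} base g (c : Y -> Prop) :=
  forall x, tower base g x -> fle x c -> ~ fle c x -> fle (g x) c.

Lemma tower_base {Y : Type} base g (Hinf : forall F : Y -> Prop, fle F (g F)) :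
  forall F, tower base g F -> fle base F.
Proof.
  induction 1.
  - eapply fle_trans; [exact IHtower | apply Hinf].
  - intros y h; left; exact h.
Qed.

Lemma lemma1 {Y : Type} base g (Hinf : forall F : Y -> Prop, fle F (g F)) :
  forall c, tower base g c -> extreme base g c ->
  forall x, tower base g x -> fle x c \/ fle (g c) x.
Proof.
  intros c Hc He x Hx; induction Hx as [x Hx IH | C HC IH Hch].
  - destruct IH as [h|h].
    + destruct (classic (fle c x)) as [h2|h2].
      * right. rewrite (fle_antisym _ _ h h2). apply fle_refl.
      * left. apply He; assumption.
    + right. eapply fle_trans; [exact h | apply Hinf].
  - destruct (classic (exists F, C F /\ fle (g c) F)) as [[F [hF h]]|hn].
    + right. intros y hy. right. exists F. split; [assumption| apply h, hy].
    + left. intros y [hy|[F [hF hy]]].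
      * apply (tower_base base g Hinf c Hc); exact hy.
      * destruct (IH F hF) as [h|h];
          [apply h, hy | exfalso; apply hn; exists F; auto].
Qed.

Lemma lemma2 {Y : Type} base g (Hinf : forall F : Y -> Prop, fle F (g F)) :
  forall x, tower base g x -> extreme base g x.
Proof.
  induction 1 as [c Hc IH | C HC IH Hch].
  - intros x Hx h1 h2. destruct (lemma1 base g Hinf c Hc IH x Hx) as [h|h].
    + destruct (classic (fle c x)) as [h3|h3].
      * rewrite (fle_antisym _ _ h h3). apply fle_refl.
      * eapply fle_trans; [apply IH; assumption | apply Hinf].
    + exfalso; apply h2; exact h.
  - intros x Hx h1 h2.
    destruct (classic (exists c, C c /\ ~ fle c x)) as [[c [hc hcx]]|hn].
    + destruct (lemma1 base g Hinf c (HC c hc) (IH c hc) x Hx) as [h|h].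
      * intros y hy. right. exists c. split; [exact hc | apply (IH c hc x Hx h hcx), hy].
      * exfalso; apply hcx; eapply fle_trans; [apply Hinf | exact h].
    + exfalso. apply h2. intros y [hy|[F [hF hy]]].
      * apply (tower_base base g Hinf x Hx); exact hy.
      * destruct (classic (fle F x)) as [h|h];
          [apply h, hy | exfalso; apply hn; exists F; auto].
Qed.

Lemma tower_chain {Y : Type} base g (Hinf : forall F : Y -> Prop, fle F (g F)) :
  fchain (tower base g).
Proof.
  intros x y hx hy.
  destruct (lemma1 base g Hinf x hx (lemma2 base g Hinf x hx) y hy) as [h|h];
    [right; exact h | left; eapply fle_trans; [apply Hinf|exact h]].
Qed.

Lemma tower_good {Y : Type} (good : (Y -> Prop) -> Prop) base g
  (Hinf : forall F : Y -> Prop, fle F (g F)) :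
  good base ->
  (forall C, fchain C -> (forall F, C F -> good F /\ fle base F) -> good (fsup base C)) ->
  (forall F, good F -> fle base F -> good (g F)) ->
  forall F, tower base g F -> good F.
Proof.
  intros Hb Hs Hg. induction 1 as [F HF IH | C HC IH Hch].
  - apply Hg; auto. apply (tower_base base g Hinf F HF).
  - apply Hs; auto. intros F hF; split; auto. apply (tower_base base g Hinf F (HC F hF)).
Qed.

Lemma zorn {Y : Type} (good : (Y -> Prop) -> Prop) (base : Y -> Prop) :
  good base ->
  (forall C, fchain C -> (forall F, C F -> good F /\ fle base F) -> good (fsup base C)) ->
  exists G, good G /\ fle base G /\ forall H, good H -> fle G H -> fle H G.
Proof.
  intros Hb Hs. apply NNPP; intro Hn.
  assert (Hex : forall G, exists H, fle G H /\
                  (good G -> fle base G -> good H /\ ~ fle H G)).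
  { intro G. destruct (classic (good G /\ fle base G)) as [[h1 h2]|h].
    - destruct (classic (exists H, good H /\ fle G H /\ ~ fle H G)) as [[H [a [b c]]]|h3].
      + exists H; split; auto.
      + exfalso; apply Hn; exists G; split; [|split]; auto.
        intros H hH hGH. apply NNPP; intro. apply h3; exists H; auto.
    - exists G; split; [apply fle_refl| intros a b; exfalso; auto]. }
  pose (g := fun G => proj1_sig (constructive_indefinite_description _ (Hex G))).
  assert (Hg : forall G, fle G (g G) /\
                 (good G -> fle base G -> good (g G) /\ ~ fle (g G) G)).
  { intro G. unfold g. exact (proj2_sig (constructive_indefinite_description _ (Hex G))). }
  assert (Hinf : forall G, fle G (g G)) by (intro; apply Hg).
  pose (s := fsup base (tower base g)).
  assert (Hs' : tower base g s).
  { apply tw_sup; [auto | apply tower_chain; auto]. }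
  assert (Hgs : good s).
  { apply (tower_good good base g Hinf Hb Hs); auto. intros F h1 h2; apply Hg; auto. }
  destruct (proj2 (Hg s) Hgs (tower_base base g Hinf s Hs')) as [_ Hns].
  apply Hns. intros y hy. right. exists (g s). split; [apply tw_succ; exact Hs'| exact hy].
Qed.

Lemma sym_half (X : ubspace) (E : X -> X -> Prop) : unif X E ->
  exists D, unif X D /\ (forall x y, D x y -> D y x) /\
    (forall x y z, D x y -> D y z -> E x z).
Proof.
  intros hE. destruct (unif_comp (unif_ax X) E hE) as [D0 [hD0 hc]].
  exists (fun x y => D0 x y /\ D0 y x). split; [|split].
  - exact (unif_inter (unif_ax X) _ _ hD0 (unif_sym (unif_ax X) _ hD0)).
  - intros x y [a b]; split; assumption.
  - intros x y z [a _] [b _]; eauto.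
Qed.

Lemma interior_open (X : ubspace) (N : X -> Prop) : is_open (fun z => nbhd z N).
Proof.
  intros z [E [hE hN]]. destruct (unif_comp (unif_ax X) E hE) as [D [hD hc]].
  exists D; split; auto. intros w hw. exists D; split; auto.
  intros v hv. apply hN. eapply hc; eauto.
Qed.

Lemma nbhd_interior (X : ubspace) (x : X) (N : X -> Prop) : nbhd x N ->
  exists U, is_open U /\ U x /\ forall y, U y -> N y.
Proof.
  intro h. exists (fun z => nbhd z N); split; [apply interior_open | split; [exact h|]].
  intros y [E [hE hN]]. apply hN. apply (unif_diag (unif_ax X) E hE).
Qed.

Lemma closure_closed (X : ubspace) (A : X -> Prop) : is_closed (closure A).
Proof.
  intros x hx N [E [hE hN]]. destruct (unif_comp (unif_ax X) E hE) as [D [hD hc]].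
  destruct (hx (fun y => D x y)) as [y [hy1 hy2]]. { exists D; split; auto. }
  destruct (hy2 (fun z => D y z)) as [z [hz1 hz2]]. { exists D; split; auto. }
  exists z; split; [apply hN; eapply hc; eauto | exact hz2].
Qed.

Lemma sub_closure (X : ubspace) (A : X -> Prop) (x : X) : A x -> closure A x.
Proof.
  intros h N [E [hE hN]]; exists x; split; [apply hN; apply (unif_diag (unif_ax X) E hE) | exact h].
Qed.

Lemma proper_preproper (X : ubspace) : closure_stable X -> proper X -> preproper X.
Proof.
  intros Hcs Hp A hA E hE.
  destruct (sym_half X E hE) as [D [hD [hsym hc]]].
  assert (HK : compact (closure A)) by (apply Hp; [apply Hcs; exact hA | apply closure_closed]).
  destruct (HK {a : X | A a} (fun p z => nbhd z (E (proj1_sig p)))) as [l hl].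
  - intro p; apply interior_open.
  - intros x hx. destruct (hx (fun y => D x y)) as [a [ha1 ha2]]. { exists D; split; auto. }
    exists (exist _ a ha2). simpl. exists D; split; auto. intros y hy.
    apply hc with x; [apply hsym; exact ha1 | exact hy].
  - exists (map (@proj1_sig _ _) l). split.
    + intros a ha. apply in_map_iff in ha. destruct ha as [p [<- _]]. exact (proj2_sig p).
    + intros x hx. destruct (hl x (sub_closure X A x hx)) as [p [hp1 hp2]].
      exists (proj1_sig p). split; [apply in_map; exact hp1|].
      destruct hp2 as [F [hF hF2]]. apply hF2, (unif_diag (unif_ax X) F hF).
Qed.

Lemma cauchy_compact_conv (X : ubspace) (F : (X -> Prop) -> Prop) (K S0 : X -> Prop) :
  cauchy_filter F -> compact K -> F S0 -> (forall x, S0 x -> K x) ->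
  exists x, filter_converges F x.
Proof.
  intros [[hT [hF [hup hint]]] hc] HK hS0 hSK.
  destruct (classic (exists x, forall N, nbhd x N -> forall T, F T -> exists w, N w /\ T w))
    as [[x hx]|hn].
  - exists x. intros N [E [hE hN]]. destruct (unif_comp (unif_ax X) E hE) as [D [hD hDc]].
    destruct (hc D hD) as [S [hS hsmall]].
    assert (hnb : nbhd x (fun y => D x y)) by (exists D; split; auto).
    destruct (hx _ hnb S hS) as [w [hw1 hw2]].
    apply hup with S; [exact hS|]. intros z hz. apply hN. apply hDc with w; auto.
  - exfalso.
    destruct (HK {p : (X -> Prop) * (X -> Prop) | is_open (fst p) /\ F (snd p) /\
                  forall w, fst p w -> snd p w -> False}
                 (fun p => fst (proj1_sig p))) as [l hl].
    + intros p. exact (proj1 (proj2_sig p)).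
    + intros x hxK.
      assert (hnx : ~ forall N, nbhd x N -> forall T, F T -> exists w, N w /\ T w)
        by (intro h; apply hn; exists x; exact h).
      apply not_all_ex_not in hnx. destruct hnx as [N hN].
      apply imply_to_and in hN. destruct hN as [hNb hN].
      apply not_all_ex_not in hN. destruct hN as [T hT1].
      apply imply_to_and in hT1. destruct hT1 as [hFT hT1].
      destruct (nbhd_interior X x N hNb) as [U [hU [hUx hUN]]].
      assert (pr : is_open (fst (U,T)) /\ F (snd (U,T)) /\
                   forall w, fst (U,T) w -> snd (U,T) w -> False).
      { simpl. split; [exact hU| split; [exact hFT|]].
        intros w h1 h2. apply hT1. exists w. split; auto. }
      exists (exist _ (U,T) pr). simpl. exact hUx.
    + assert (hall : F (fun w => forall p, In p l -> snd (proj1_sig p) w)).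
      { clear hl. induction l as [|p l IH].
        - apply hup with (fun _ => True); [exact hT| intros w _ p []].
        - apply hup with (fun w => snd (proj1_sig p) w /\
                            forall q, In q l -> snd (proj1_sig q) w).
          + apply hint; [exact (proj1 (proj2 (proj2_sig p))) | exact IH].
          + intros w [h1 h2] q [<-|hq]; auto. }
      assert (hne : exists w, S0 w /\ forall p, In p l -> snd (proj1_sig p) w).
      { apply NNPP; intro n. apply hF.
        apply hup with (fun w => S0 w /\ forall p, In p l -> snd (proj1_sig p) w).
        - apply hint; auto.
        - intros w h; apply n; exists w; exact h. }
      destruct hne as [w [hw1 hw2]]. destruct (hl w (hSK w hw1)) as [p [hp1 hp2]].
      exact (proj2 (proj2 (proj2_sig p)) w hp2 (hw2 p hp1)).
Qed.

Lemma proper_complete (X : ubspace) : closure_stable X -> weakly_u_II_compatible X ->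
  proper X -> cauchy_complete X.
Proof.
  intros Hcs [Y [i [HYc [HYII [hinj [hU hB]]]]]] Hp F HF.
  pose proof HF as HF0.
  pose (G := fun T : Y -> Prop => F (fun a => T (i a))).
  destruct HF as [[hT [hF [hup hint]]] hc].
  assert (HG : cauchy_filter G).
  { split; [split; [exact hT | split; [exact hF| split]]|].
    - intros S T hS hST. apply hup with (fun a => S (i a)); [exact hS| intros a; apply hST].
    - intros S T hS hT'. exact (hint _ _ hS hT').
    - intros E' hE'.
      assert (hE : unif X (fun a b => E' (i a) (i b))).
      { apply (proj2 (hU _)). exists E'; split; [exact hE'| intros a b; simpl; split; auto]. }
      destruct (hc _ hE) as [S [hS hsm]]. exists (fun y => exists a, S a /\ y = i a). split.
      + unfold G. apply hup with S; [exact hS|]. intros a ha; exists a; auto.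
      + intros y1 y2 [a1 [h1 ->]] [a2 [h2 ->]]. apply hsm; auto. }
  destruct (HYc G HG) as [y hy]. destruct (HYII y) as [N [hN hNb]].
  assert (hFN : F (fun a => N (i a))) by exact (hy N hN).
  assert (hb : bounded (fun a => N (i a))).
  { unfold bounded. apply (proj2 (hB _)). exists N; split; [exact hNb| intro; simpl; split; auto]. }
  apply (cauchy_compact_conv X F (closure (fun a => N (i a))) (fun a => N (i a))).
  - exact HF0.
  - apply Hp; [apply Hcs; exact hb | apply closure_closed].
  - exact hFN.
  - intros x hx; apply sub_closure; exact hx.
Qed.

Lemma complete_compact (X : ubspace) (A : X -> Prop) :
  cauchy_complete X -> precompact A -> is_closed A -> compact A.
Proof.
  intros Hc Hpc Hcl I O Hop Hcov. apply NNPP; intro Hnf.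
  pose (NFC := fun S : X -> Prop =>
         ~ exists l : list I, forall x, A x -> S x -> exists i, In i l /\ O i x).
  pose (good := fun Phi : (X -> Prop) -> Prop =>
     (forall S T, Phi S -> (forall x, S x -> T x) -> Phi T) /\
     (forall S T, Phi S -> Phi T -> Phi (fun x => S x /\ T x)) /\
     (forall S, Phi S -> NFC S)).
  pose (base := fun S : X -> Prop => forall x, A x -> S x).
  assert (Hb : good base).
  { split; [|split].
    - intros S T hS hST x hx. apply hST, hS, hx.
    - intros S T hS hT x hx. split; auto.
    - intros S hS [l hl]. apply Hnf. exists l. intros x hx. apply hl; auto. }
  assert (Hsup : forall C, fchain C -> (forall F, C F -> good F /\ fle base F) ->
                   good (fsup base C)).
  { intros C Hch HC. split; [|split].
    - intros S T [hS|[F [hF hS]]] hST.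
      + left. intros x hx; apply hST, hS, hx.
      + right. exists F. split; auto. apply (proj1 (proj1 (HC F hF))) with S; auto.
    - intros S T [hS|[F [hF hS]]] [hT|[F' [hF' hT]]].
      + left. intros x hx; split; auto.
      + right. exists F'. split; auto. apply (proj1 (proj2 (proj1 (HC F' hF')))); auto.
        apply (proj2 (HC F' hF')); exact hS.
      + right. exists F. split; auto. apply (proj1 (proj2 (proj1 (HC F hF)))); auto.
        apply (proj2 (HC F hF)); exact hT.
      + destruct (Hch F F' hF hF') as [h|h].
        * right; exists F'; split; auto. apply (proj1 (proj2 (proj1 (HC F' hF')))); auto.
        * right; exists F; split; auto. apply (proj1 (proj2 (proj1 (HC F hF)))); auto.
    - intros S [hS|[F [hF hS]]].
      + exact (proj2 (proj2 Hb) S hS).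
      + exact (proj2 (proj2 (proj1 (HC F hF))) S hS). }
  destruct (zorn good base Hb Hsup) as [G [[Gup [Gint GN]] [HbG Gmax]]].
  assert (GT : forall S, (forall x, A x -> S x) -> G S) by (intros S h; apply HbG; exact h).
  assert (HG : cauchy_filter G).
  { split; [split; [|split; [|split]]|].
    - apply GT; auto.
    - intro h. apply (GN _ h). exists nil. intros x _ [].
    - exact Gup.
    - exact Gint.
    - intros E hE. destruct (sym_half X E hE) as [D [hD [hsym hcmp]]].
      destruct (Hpc D hD) as [la [hla1 hla2]].
      assert (Hex : exists a, In a la /\ forall S, G S -> NFC (fun x => S x /\ D a x)).
      { apply NNPP; intro hn.
        assert (Hall : forall a, In a la -> exists S, G S /\ exists l : list I,
                   forall x, A x -> S x -> D a x -> exists i, In i l /\ O i x).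
        { intros a ha. apply NNPP; intro h2. apply hn. exists a. split; auto.
          intros S hS hcov. apply h2. exists S. split; auto.
          destruct hcov as [l hl]. exists l. intros x hx h1 h3.
          apply hl; [exact hx | split; assumption]. }
        assert (Hcomb : forall la', (forall a, In a la' -> In a la) ->
                  exists S, G S /\ exists l : list I, forall x, A x -> S x ->
                    (exists a, In a la' /\ D a x) -> exists i, In i l /\ O i x).
        { induction la' as [|a la' IH]; intros hsub.
          - exists (fun _ => True). split; [apply GT; auto|]. exists nil.
            intros x _ _ [a [[] _]].
          - destruct (Hall a (hsub a (or_introl eq_refl))) as [S1 [hS1 [l1 hl1]]].
            destruct IH as [S2 [hS2 [l2 hl2]]].
            { intros b hb; apply hsub; right; exact hb. }
            exists (fun x => S1 x /\ S2 x). split; [apply Gint; auto|]. exists (l1 ++ l2).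
            intros x hx [h1 h2] [b [[<-|hb] hbx]].
            + destruct (hl1 x hx h1 hbx) as [j [hj1 hj2]]. exists j; split; auto.
              apply in_or_app; left; auto.
            + destruct (hl2 x hx h2 (ex_intro _ b (conj hb hbx))) as [j [hj1 hj2]].
              exists j; split; auto. apply in_or_app; right; auto. }
        destruct (Hcomb la (fun a h => h)) as [S [hS [l hl]]].
        apply (GN S hS). exists l. intros x hx hSx.
        apply hl; [exact hx | exact hSx | apply hla2; exact hx]. }
      destruct Hex as [a [ha hNa]].
      pose (G' := fun T : X -> Prop => exists S, G S /\ forall x, S x -> D a x -> T x).
      assert (hG' : good G').
      { split; [|split].
        - intros T T' [S [hS h]] hTT'. exists S; split; auto.
        - intros T T' [S [hS h]] [S' [hS' h']]. exists (fun x => S x /\ S' x).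
          split; [apply Gint; auto|]. intros x [h1 h2] hd; split; auto.
        - intros T [S [hS h]] [l hl]. apply (hNa S hS). exists l.
          intros x hx [h1 h2]. apply hl; auto. }
      assert (hGG' : fle G G') by (intros S hS; exists S; split; auto).
      exists (fun x => D a x). split.
      + apply (Gmax G' hG' hGG'). exists (fun _ => True). split; [apply GT; auto| auto].
      + intros x y hx hy. apply hcmp with a; [apply hsym; exact hx | exact hy]. }
  destruct (Hc G HG) as [x hx].
  assert (hAx : A x).
  { apply Hcl. intros N hN. apply NNPP; intro hn. apply (GN (fun _ => False)).
    - apply Gup with (fun y => N y /\ A y).
      + apply Gint; [apply hx; exact hN | apply GT; auto].
      + intros y hy; apply hn; exists y; exact hy.
    - exists nil. intros _ _ []. }
  destruct (Hcov x hAx) as [j hj].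
  apply (GN (O j)).
  - apply hx. apply Hop; exact hj.
  - exists (j :: nil). intros y _ hy. exists j; split; [left; auto | exact hy].
Qed.

Lemma proper_lc (X : ubspace) : closure_stable X -> weakly_u_II_compatible X ->
  proper X -> locally_compact X.
Proof.
  intros Hcs [Y [i [_ [HYII [_ [hU hB]]]]]] Hp x.
  destruct (HYII (i x)) as [N [[E' [hE' hN]] hNb]].
  exists (closure (fun a => N (i a))). split.
  - exists (fun a b => E' (i a) (i b)). split.
    + apply (proj2 (hU _)). exists E'; split; [exact hE'| intros a b; simpl; split; auto].
    + intros y hy. apply sub_closure. apply hN; exact hy.
  - apply Hp; [|apply closure_closed]. apply Hcs. unfold bounded.
    apply (proj2 (hB _)). exists N; split; [exact hNb| intro; simpl; split; auto].
Qed.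

Theorem mainTheorem8 (X : ubspace) :
  closure_stable X -> weakly_u_II_compatible X ->
  (proper X <-> cauchy_complete X /\ preproper X) /\
  (proper X -> locally_compact X).
Proof.
  intros Hcs Hw. split; [split|].
  - intro Hp. split; [apply proper_complete; auto | apply proper_preproper; auto].
  - intros [Hc Hpp] A hA hcl. apply complete_compact; auto.
  - apply proper_lc; auto.
Qed.
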